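(* Let $m,n\in\mathbb{Z}\setminus\{0\}$ and let $q$ be an $(m,n)$-phenotype with $q\neq1$ and $q\neq\infty$. Then every transitive $\mathrm{BS}(m,n)$-action of phenotype $q$ on an infinite set fails to be primitive. In particular, no transitive $\mathrm{BS}(m,n)$-action of phenotype $q$ is highly transitive.
   Context: $\mathrm{BS}(m,n)=\langle b,t\mid tb^mt^{-1}=b^n\rangle$; actions are on the right. For a prime $p$, $|k|_p$ is the $p$-adic valuation. For $L\in\mathbb{Z}_{\ge1}$, $\mathrm{Ph}_{m,n}(L)=\prod p^{|L|_p}$ over primes $p$ with $|m|_p=|n|_p$ and $|L|_p>|n|_p$; $\mathrm{Ph}_{m,n}(\infty)=\infty$. The phenotype of a transitive action with stabilizer $\Lambda$ is $\mathrm{Ph}_{m,n}([\langle b\rangle:\langle b\rangle\cap\Lambda])$; an $(m,n)$-phenotype is a value so obtained. An action is primitive if it preserves no equivalence relation other than equality and the full relation; highly transitive means $d$-transitive (on $d$-tuples of distinct points) for all $d$. *)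

(* Defs.v *)
From mathcomp Require Import all_boot all_order all_algebra.
Set Implicit Arguments. Unset Strict Implicit. Unset Printing Implicit Defensive.
Import Order.TTheory GRing.Theory Num.Theory.

Section BS.
Variable X : Type.

Definition ziter (f finv : X -> X) (k : int) (x : X) : X :=
  match k with
  | Posz k => iter k f x
  | Negz k => iter k.+1 finv x
  end.

(* A right action of BS(m,n) = <b,t | t b^m t^-1 = b^n> on X:
   x.b = B x, x.b^-1 = Bi x, x.t = T x, x.t^-1 = Ti x. By the universal
   property of the presentation, such actions are exactly pairs of
   bijections (B,T) with x.(t b^m t^-1) = x.b^n. *)
Definition is_BS_action (m n : int) (B Bi T Ti : X -> X) : Prop :=
  [/\ cancel B Bi, cancel Bi B, cancel T Ti, cancel Ti T &
      forall x, Ti (ziter B Bi m (T x)) = ziter B Bi n x].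

Inductive gen := Gb | Gbi | Gt | Gti.

Definition act_gen (B Bi T Ti : X -> X) (g : gen) : X -> X :=
  match g with Gb => B | Gbi => Bi | Gt => T | Gti => Ti end.

(* right action: the first letter acts first *)
Definition act_word (B Bi T Ti : X -> X) (w : seq gen) (x : X) : X :=
  foldl (fun y g => act_gen B Bi T Ti g y) x w.

Definition transitive_action (B Bi T Ti : X -> X) : Prop :=
  forall x y, exists w, act_word B Bi T Ti w x = y.

Definition infinite_type : Prop :=
  forall (k : nat) (f : 'I_k -> X), exists x : X, forall i, f i <> x.

Definition primitive_action (B Bi T Ti : X -> X) : Prop :=
  forall R : X -> X -> Prop,
    (forall x, R x x) -> (forall x y, R x y -> R y x) ->
    (forall x y z, R x y -> R y z -> R x z) ->
    (forall w x y, R x y -> R (act_word B Bi T Ti w x) (act_word B Bi T Ti w y)) ->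
    (forall x y, R x y <-> x = y) \/ (forall x y, R x y).

Definition d_transitive (B Bi T Ti : X -> X) (d : nat) : Prop :=
  forall u v : 'I_d -> X, injective u -> injective v ->
    exists w, forall i, act_word B Bi T Ti w (u i) = v i.

Definition highly_transitive (B Bi T Ti : X -> X) : Prop :=
  forall d, d_transitive B Bi T Ti d.

(* [<b> : <b> \cap Stab(x0)] : Some l if <b> \cap Stab(x0) = <b^l>, l >= 1,
   None (= infinity) if <b> \cap Stab(x0) is trivial *)
Definition b_index (B : X -> X) (x0 : X) (L : option nat) : Prop :=
  match L with
  | Some l => (0 < l)%N /\ iter l B x0 = x0 /\
              (forall k, (0 < k < l)%N -> iter k B x0 <> x0)
  | None => forall k, (0 < k)%N -> iter k B x0 <> x0
  end.

End BS.

Definition Ph (m n : int) (L : option nat) : option nat :=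
  match L with
  | None => None
  | Some l => Some (\prod_(p < l.+1 | prime p && (logn p `|m| == logn p `|n|)
                                     && (logn p `|n| < logn p l)%N) p ^ logn p l)%N
  end.

(* the phenotype of the transitive action (B,T) computed at the base point x0
   (i.e. with Lambda the stabilizer of x0) is q *)
Definition has_phenotype (m n : int) (X : Type) (B : X -> X) (x0 : X)
  (q : option nat) : Prop :=
  exists L, b_index B x0 L /\ Ph m n L = q.

Definition is_phenotype (m n : int) (q : option nat) : Prop :=
  exists (X : Type) (B Bi T Ti : X -> X) (x0 : X),
    is_BS_action m n B Bi T Ti /\ transitive_action B Bi T Ti /\
    has_phenotype m n B x0 q.

(* Main.v *)
Require Import Defs.
From mathcomp Require Import all_boot all_order all_algebra.
From mathcomp Require Import zify.
From mathcomp.algebra_tactics Require Import ring.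
From Stdlib Require Import Classical.
Set Implicit Arguments. Unset Strict Implicit. Unset Printing Implicit Defensive.
Import Order.TTheory GRing.Theory Num.Theory.
Local Open Scope ring_scope.

Lemma zitS (X : Type) (B Bi : X -> X) : cancel B Bi -> cancel Bi B ->
  forall z x, ziter B Bi (z + 1) x = B (ziter B Bi z x).
Proof.
move=> c1 c2 [k|k] x.
  by have -> : Posz k + 1 = Posz k.+1 by lia.
case: k => [|k]; first by rewrite /= c2.
have -> : Negz k.+1 + 1 = Negz k by lia.
by rewrite /= c2.
Qed.

Lemma zitP (X : Type) (B Bi : X -> X) : cancel B Bi -> cancel Bi B ->
  forall z x, ziter B Bi (z - 1) x = Bi (ziter B Bi z x).
Proof.
move=> c1 c2 z x.
by rewrite -{2}(subrK 1 z) (zitS c1 c2) c1.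
Qed.

Lemma zit0 (X : Type) (B Bi : X -> X) x : ziter B Bi 0 x = x.
Proof. by []. Qed.

Lemma zitD (X : Type) (B Bi : X -> X) : cancel B Bi -> cancel Bi B ->
  forall a b x, ziter B Bi (a + b) x = ziter B Bi a (ziter B Bi b x).
Proof.
move=> c1 c2 a b x.
have Hup : forall a, ziter B Bi (a + b) x = ziter B Bi a (ziter B Bi b x) ->
   ziter B Bi (a + 1 + b) x = ziter B Bi (a + 1) (ziter B Bi b x).
  move=> a' IH; rewrite -addrA (addrC 1) addrA !(zitS c1 c2); congr B; exact: IH.
have Hdn : forall a, ziter B Bi (a + b) x = ziter B Bi a (ziter B Bi b x) ->
   ziter B Bi (a - 1 + b) x = ziter B Bi (a - 1) (ziter B Bi b x).
  move=> a' IH; rewrite -addrA (addrC (-1)) addrA !(zitP c1 c2); congr Bi; exact: IH.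
have Hpos : forall k : nat, ziter B Bi (k%:Z + b) x = ziter B Bi k (ziter B Bi b x)
   /\ ziter B Bi (- k%:Z + b) x = ziter B Bi (- k%:Z) (ziter B Bi b x).
  elim=> [|k [IH1 IH2]]; first by rewrite oppr0 !add0r.
  split.
    have -> : (k.+1)%:Z = k%:Z + 1 by lia.
    exact: Hup.
  have -> : - (k.+1)%:Z = - k%:Z - 1 by lia.
  exact: Hdn.
case: a => [k|k]; first exact: (Hpos k).1.
rewrite NegzE; exact: (Hpos k.+1).2.
Qed.

Lemma zitC (X : Type) (B Bi : X -> X) : cancel B Bi -> cancel Bi B ->
  forall a b x, ziter B Bi a (ziter B Bi b x) = ziter B Bi b (ziter B Bi a x).
Proof. by move=> c1 c2 a b x; rewrite -!(zitD c1 c2) addrC. Qed.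

Lemma zit1 (X : Type) (B Bi : X -> X) x : ziter B Bi 1 x = B x.
Proof. by []. Qed.

Lemma zitN1 (X : Type) (B Bi : X -> X) x : ziter B Bi (-1) x = Bi x.
Proof. by []. Qed.

Lemma zit_inj (X : Type) (B Bi : X -> X) : cancel B Bi -> cancel Bi B ->
  forall z x y, ziter B Bi z x = ziter B Bi z y -> x = y.
Proof.
move=> c1 c2 z x y H.
by have := congr1 (ziter B Bi (- z)) H; rewrite -!(zitD c1 c2) addNr.
Qed.

Lemma zitM (X : Type) (B Bi : X -> X) : cancel B Bi -> cancel Bi B ->
  forall a x, ziter B Bi a x = x -> forall c, ziter B Bi (a * c) x = x.
Proof.
move=> c1 c2 a x H.
have Hn : forall k : nat, ziter B Bi (a * k%:Z) x = x.
  elim=> [|k IH]; first by rewrite mulr0.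
  have -> : a * (k.+1)%:Z = a + a * k%:Z by lia.
  by rewrite (zitD c1 c2) IH H.
case=> [k|k]; first exact: Hn.
rewrite NegzE mulrN.
apply: (@zit_inj _ B Bi c1 c2 (a * (k.+1)%:Z)).
by rewrite -(zitD c1 c2) subrr Hn.
Qed.

Lemma zit_iter (X : Type) (B Bi : X -> X) (k : nat) x : ziter B Bi k%:Z x = iter k B x.
Proof. by []. Qed.

Lemma conj_gen (X : Type) (B Bi F Fi : X -> X) (a c : int) :
  cancel B Bi -> cancel Bi B -> cancel F Fi -> cancel Fi F ->
  (forall x, ziter B Bi a (F x) = F (ziter B Bi c x)) ->
  forall k x, ziter B Bi (a * k) (F x) = F (ziter B Bi (c * k) x).
Proof.
move=> c1 c2 f1 f2 H.
have Hn : forall (k : nat) x, ziter B Bi (a * k%:Z) (F x) = F (ziter B Bi (c * k%:Z) x).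
  elim=> [|k IH] x; first by rewrite !mulr0.
  have -> : a * (k.+1)%:Z = a + a * k%:Z by lia.
  have -> : c * (k.+1)%:Z = c + c * k%:Z by lia.
  by rewrite !(zitD c1 c2) IH H.
case=> [k|k] x; first exact: Hn.
rewrite NegzE !mulrN.
apply: (@zit_inj _ B Bi c1 c2 (a * (k.+1)%:Z)).
rewrite -(zitD c1 c2) subrr zit0 Hn -(zitD c1 c2) subrr zit0.
by [].
Qed.

Lemma least_ex (P : nat -> Prop) n : P n -> exists k, P k /\ forall j, (j < k)%N -> ~ P j.
Proof.
elim: n {-2}n (leqnn n) => [|N IH] n0 Hn0 Pn.
  exists n0; split => // j Hj; move: Hn0 Hj; rewrite leqn0 => /eqP ->.
  by [].
case: (classic (exists j, (j < n0)%N /\ P j)) => [[j [Hj Pj]]|Hno].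
  apply: (IH j) => //; lia.
exists n0; split => // j Hj Pj; apply: Hno; by exists j.
Qed.

Lemma per_char (X : Type) (B Bi : X -> X) : cancel B Bi -> cancel Bi B ->
  forall (L : nat) y, (0 < L)%N -> iter L B y = y ->
  (forall k, (0 < k < L)%N -> iter k B y <> y) ->
  forall z, ziter B Bi z y = y <-> (L%:Z %| z)%Z.
Proof.
move=> c1 c2 L y L0 HL Hmin z; split.
  move=> Hz.
  have Hm : ziter B Bi (z %% L%:Z)%Z y = y.
    have -> : (z %% L%:Z)%Z = z + L%:Z * (- (z %/ L%:Z)%Z).
      by rewrite {2}(divz_eq z L%:Z); lia.
    rewrite (zitD c1 c2) (zitM c1 c2) //; exact: HL.
  apply/dvdz_mod0P.
  have Hge : (0 <= (z %% L%:Z)%Z) by apply: modz_ge0; lia.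
  have Hlt : ((z %% L%:Z)%Z < L%:Z) by apply: ltz_pmod; lia.
  move: Hm Hge Hlt; case: (z %% L%:Z)%Z => [k|k] //= Hk _ Hlt.
  case: k Hk Hlt => [|k] Hk Hlt //.
  exfalso; apply: (Hmin k.+1) => //; apply/andP; split => //; lia.
case/dvdzP => c ->; rewrite mulrC; apply: (zitM c1 c2); exact: HL.
Qed.

Lemma minper (X : Type) (B Bi : X -> X) : cancel B Bi -> cancel Bi B ->
  forall y z0, z0 != 0 -> ziter B Bi z0 y = y ->
  exists L : nat, (0 < L)%N /\ forall z, ziter B Bi z y = y <-> (L%:Z %| z)%Z.
Proof.
move=> c1 c2 y z0 nz Hz0.
have HK : iter `|z0|%N B y = y.
  rewrite -(zit_iter B Bi); case: (ltrP z0 0) => h.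
    have -> : (`|z0|%N)%:Z = z0 * (-1) by lia.
    exact: (zitM c1 c2).
  by have -> : (`|z0|%N)%:Z = z0 by lia.
have z0p : (0 < `|z0|)%N by rewrite absz_gt0.
have [L [[L0 HL] Hmin]] := @least_ex (fun k => (0 < k)%N /\ iter k B y = y) `|z0|%N
  (conj z0p HK).
exists L; split => //; apply: (per_char c1 c2) => // k /andP [k0 kL] Hk.
exact: (Hmin k kL).
Qed.

Definition Gp (X : Type) (B Bi : X -> X) (p e : nat) (x : X) :=
  exists L : nat, (0 < L)%N /\ (forall z, ziter B Bi z x = x <-> (L%:Z %| z)%Z)
    /\ (e < logn p L)%N.

Definition Rel (X : Type) (B Bi : X -> X) (p : nat) (x y : X) :=
  exists z : int, y = ziter B Bi z x /\ ziter B Bi (p%:Z * z) x = x.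

Lemma dvdzE (d m : int) : (d %| m)%Z = (`|d| %| `|m|)%N.
Proof. by []. Qed.

Lemma G_F (X : Type) (B Bi F Fi : X -> X) (a c : int) (p e : nat) :
  cancel B Bi -> cancel Bi B -> cancel F Fi -> cancel Fi F ->
  (forall k x, ziter B Bi (a * k) (F x) = F (ziter B Bi (c * k) x)) ->
  a != 0 -> c != 0 -> prime p -> logn p `|a| = e -> logn p `|c| = e ->
  forall x, Gp B Bi p e x -> Gp B Bi p e (F x).
Proof.
move=> c1 c2 f1 f2 Hc a0 c0 pr Ha Hcc x [L [L0 [HL He]]].
have Hfix : ziter B Bi (a * L%:Z) (F x) = F x.
  rewrite Hc; congr F; apply/HL; exact: dvdz_mull (dvdzz _).
have aL0 : a * L%:Z != 0 by rewrite mulf_neq0 //; lia.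
have [L' [L'0 HL']] := minper c1 c2 aL0 Hfix.
exists L'; split => //; split => //.
rewrite ltnNge; apply/negP => Hle.
have [K0 cop Edec] := pfactor_coprime pr L'0.
have aP : (0 < `|a|)%N by rewrite absz_gt0.
have cP : (0 < `|c|)%N by rewrite absz_gt0.
have K0P : (0 < K0)%N by move: L'0; rewrite Edec; case: K0 {Edec cop}.
have H1 : ziter B Bi (a * K0%:Z) (F x) = F x.
  apply/HL'; rewrite dvdzE abszM !absz_nat Edec mulnC.
  apply: dvdn_mul (dvdnn _).
  by rewrite pfactor_dvdn // Ha.
rewrite Hc in H1.
have H2 := can_inj f1 H1.
move/HL: H2; rewrite dvdzE abszM !absz_nat => H3.
have H4 : (p ^ e.+1 %| `|c| * K0)%N.
  apply: dvdn_trans H3; by rewrite pfactor_dvdn.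
move: H4; rewrite pfactor_dvdn ?muln_gt0 ?aP ?cP ?K0P // lognM // Hcc.
by rewrite (logn_coprime cop) addn0 ltnn.
Qed.

Lemma Rel_F (X : Type) (B Bi F Fi : X -> X) (a c : int) (p e : nat) :
  cancel B Bi -> cancel Bi B -> cancel F Fi -> cancel Fi F ->
  (forall k x, ziter B Bi (a * k) (F x) = F (ziter B Bi (c * k) x)) ->
  c != 0 -> prime p -> logn p `|c| = e ->
  forall x y, Gp B Bi p e x -> Rel B Bi p x y -> Rel B Bi p (F x) (F y).
Proof.
move=> c1 c2 f1 f2 Hc c0 pr Hcc x y [L [L0 [HL He]]] [z [-> Hz]].
have p0 : (0 < p)%N by apply: prime_gt0.
have cP : (0 < `|c|)%N by rewrite absz_gt0.
move/HL: Hz => Hpz.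
set D := gcdn L `|c|.
have [u [v Huv]] := Bezoutz L%:Z c.
have DL : (D %| L)%N by apply: dvdn_gcdl.
have D0 : (0 < D)%N by rewrite gcdn_gt0 L0.
have DpL : (D * p %| L)%N.
  rewrite -(divnK DL) mulnC dvdn_pmul2r //.
  have Lq0 : (0 < L %/ D)%N by rewrite divn_gt0 // dvdn_leq.
  have : (0 < logn p (L %/ D))%N.
    have E := lognM p D0 Lq0; rewrite mulnC (divnK DL) in E.
    have : (logn p D <= e)%N.
      rewrite -Hcc; apply: dvdn_leq_log => //; exact: dvdn_gcdr.
    lia.
  by rewrite logn_gt0 mem_primes => /and3P [].
have Dz : (D%:Z %| z)%Z.
  rewrite -(dvdz_mul2r (p := p%:Z)); last by lia.
  apply: (@dvdz_trans L%:Z); last by rewrite mulrC.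
  by rewrite dvdzE abszM !absz_nat.
case/dvdzP: Dz => w Ew.
have Hgz : gcdz L%:Z c = D%:Z by [].
have Ez : z = c * (v * w) + L%:Z * (u * w).
  rewrite Ew -Hgz -Huv; ring.
have HLx : ziter B Bi L%:Z x = x by apply/HL; exact: dvdzz.
exists (a * (v * w)); split.
  by rewrite Hc Ez (zitD c1 c2) (zitM c1 c2 HLx).
have -> : p%:Z * (a * (v * w)) = a * (p%:Z * (v * w)) by ring.
rewrite Hc; congr F.
have -> : c * (p%:Z * (v * w)) = p%:Z * z + L%:Z * (- (p%:Z * (u * w))).
  rewrite Ez; ring.
rewrite (zitD c1 c2) (zitM c1 c2 HLx).
by apply/HL.
Qed.

Lemma Gp_zit (X : Type) (B Bi : X -> X) p e : cancel B Bi -> cancel Bi B ->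
  forall s x, Gp B Bi p e x -> Gp B Bi p e (ziter B Bi s x).
Proof.
move=> c1 c2 s x [L [L0 [HL He]]]; exists L; split => //; split => // z.
rewrite -HL; split => H.
  by apply: (zit_inj c1 c2 (z := s)); rewrite (zitC c1 c2).
by rewrite (zitC c1 c2) H.
Qed.

Lemma Rel_zit (X : Type) (B Bi : X -> X) p : cancel B Bi -> cancel Bi B ->
  forall s x y, Rel B Bi p x y -> Rel B Bi p (ziter B Bi s x) (ziter B Bi s y).
Proof.
move=> c1 c2 s x y [z [-> Hz]]; exists z; split; first exact: (zitC c1 c2).
by rewrite (zitC c1 c2) Hz.
Qed.

Lemma Rel_refl (X : Type) (B Bi : X -> X) p x : Rel B Bi p x x.
Proof. by exists 0; rewrite mulr0. Qed.

Lemma Rel_sym (X : Type) (B Bi : X -> X) p : cancel B Bi -> cancel Bi B ->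
  forall x y, Rel B Bi p x y -> Rel B Bi p y x.
Proof.
move=> c1 c2 x y [z [-> Hz]]; exists (- z); split.
  by rewrite -(zitD c1 c2) addNr.
have H1 : ziter B Bi (p%:Z * - z) x = x.
  by rewrite mulrN -mulrN1 (zitM c1 c2 Hz).
by rewrite (zitC c1 c2) H1.
Qed.

Lemma Rel_trans (X : Type) (B Bi : X -> X) p : cancel B Bi -> cancel Bi B ->
  forall x y w, Rel B Bi p x y -> Rel B Bi p y w -> Rel B Bi p x w.
Proof.
move=> c1 c2 x y w [z1 [-> Hz1]] [z2 [-> Hz2]]; exists (z2 + z1); split.
  by rewrite (zitD c1 c2).
have H2 : ziter B Bi (p%:Z * z2) x = x.
  apply: (zit_inj c1 c2 (z := z1)); by rewrite (zitC c1 c2).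
by rewrite mulrDr (zitD c1 c2) Hz1 H2.
Qed.

Lemma inj2 (X : Type) (x y : X) : x <> y ->
  injective (fun i : 'I_2 => if i == ord0 then x else y).
Proof.
move=> nxy [[|[|i]] Hi] [[|[|j]] Hj] //= H; try (apply/val_inj => //=); try lia.
all: try by exfalso; apply: nxy.
Qed.

Theorem mainTheorem14 (m n : int) (q : nat) :
  m != 0%R -> n != 0%R -> is_phenotype m n (Some q) -> q != 1%N ->
  forall (X : Type) (B Bi T Ti : X -> X) (x0 : X),
    is_BS_action m n B Bi T Ti -> transitive_action B Bi T Ti ->
    has_phenotype m n B x0 (Some q) -> infinite_type X ->
    ~ primitive_action B Bi T Ti /\ ~ highly_transitive B Bi T Ti.
Proof.
move=> m0 n0 _ q1 X B Bi T Ti x0 [c1 c2 t1 t2 Hrel] Htr [L [Hb HPh]] Hinf.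
case: L Hb HPh => [l|] Hb HPh; last by [].
case: Hb => l0 [Hl Hmin].
case: HPh => Hq.
have [p [pr Hmn Hnl]] : exists p, [/\ prime p, logn p `|m| = logn p `|n|
     & (logn p `|n| < logn p l)%N].
  apply: NNPP => Hno; move/eqP: q1; apply; rewrite -Hq.
  apply: big1 => i /andP [/andP [pi /eqP Hi] Hi2].
  by exfalso; apply: Hno; exists i.
set e := logn p `|n|.
have HT : forall x, ziter B Bi m (T x) = T (ziter B Bi n x).
  by move=> x; rewrite -(Hrel x) t2.
have conjT := conj_gen c1 c2 t1 t2 HT.
have HTi : forall x, ziter B Bi n (Ti x) = Ti (ziter B Bi m x).
  by move=> x; rewrite -{2}(t2 x) HT t1.
have conjTi := conj_gen c1 c2 t2 t1 HTi.
have Hchar := per_char c1 c2 l0 Hl Hmin.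
have G0 : Gp B Bi p e x0 by exists l.
have Gstep : forall g x, Gp B Bi p e x -> Gp B Bi p e (act_gen B Bi T Ti g x).
  case=> x Gx /=.
  - exact: (Gp_zit c1 c2 1).
  - exact: (Gp_zit c1 c2 (-1)).
  - exact: (G_F c1 c2 t1 t2 conjT m0 n0 pr Hmn erefl).
  - exact: (G_F c1 c2 t2 t1 conjTi n0 m0 pr erefl Hmn).
have Gall : forall y, Gp B Bi p e y.
  have Hw : forall w x, Gp B Bi p e x -> Gp B Bi p e (act_word B Bi T Ti w x).
    elim=> [|g w IH] x Gx //=; apply: IH; exact: Gstep.
  move=> y; have [w <-] := Htr x0 y; exact: Hw.
have Rword : forall w x y, Rel B Bi p x y ->
    Rel B Bi p (act_word B Bi T Ti w x) (act_word B Bi T Ti w y).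
  elim=> [|g w IH] x y Rxy //=; apply: IH.
  case: g => /=.
  - exact: (Rel_zit c1 c2 1).
  - exact: (Rel_zit c1 c2 (-1)).
  - exact: (Rel_F c1 c2 t1 t2 conjT n0 pr erefl (Gall x)).
  - exact: (Rel_F c1 c2 t2 t1 conjTi m0 pr Hmn (Gall x)).
have pl : (p %| l)%N.
  have : (0 < logn p l)%N by lia.
  by rewrite logn_gt0 mem_primes => /and3P [].
set y1 := iter (l %/ p) B x0.
have R1 : Rel B Bi p x0 y1.
  exists (l %/ p)%N%:Z; split; first by [].
  have -> : p%:Z * (l %/ p)%N%:Z = l%:Z by rewrite -PoszM mulnC divnK.
  exact: Hl.
have ny1 : x0 <> y1.
  move=> E; have H1 : (0 < l %/ p < l)%N.
    rewrite divn_gt0 ?prime_gt0 // dvdn_leq //=.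
    by rewrite ltn_Pdiv ?prime_gt1.
  exact: (Hmin _ H1 (esym E)).
have [u0 Hu0] := Hinf l (fun i => iter i B x0).
have nR : ~ Rel B Bi p x0 u0.
  move=> [z [Ez _]].
  have Hr : ziter B Bi z x0 = ziter B Bi (z %% l%:Z)%Z x0.
    have E : z = (z %% l%:Z)%Z + l%:Z * (z %/ l%:Z)%Z.
      by rewrite {1}(divz_eq z l%:Z); ring.
    by rewrite {1}E (zitD c1 c2) (zitM c1 c2 (Hl : ziter B Bi l%:Z x0 = x0)).
  have Hge : (0 <= (z %% l%:Z)%Z) by apply: modz_ge0; lia.
  have Hlt : ((z %% l%:Z)%Z < l%:Z) by apply: ltz_pmod; lia.
  rewrite Hr in Ez.
  move: Ez Hge Hlt; case: (z %% l%:Z)%Z => [k|k] // Ez _ Hlt.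
  have Hk : (k < l)%N by lia.
  exact: (Hu0 (Ordinal Hk) (esym Ez)).
have nx0 : x0 <> u0.
  by move=> E; apply: (Hu0 (Ordinal l0)); rewrite /= E.
split.
  move=> Hprim.
  case: (Hprim (Rel B Bi p) (@Rel_refl X B Bi p) (Rel_sym c1 c2)
                (Rel_trans c1 c2) Rword) => [H|H].
    by apply: ny1; apply/H.
  by apply: nR; apply: H.
move=> Hht.
have [w Hw] := Hht 2 _ _ (inj2 ny1) (inj2 nx0).
have := Rword w _ _ R1.
have := Hw ord0; have := Hw ord_max => /= -> ->.
exact: nR.
Qed.
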